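(* Let $\mathcal D$ be a $(\gamma,V)$-stable distribution of $\mathbf X$. For a set of families $A\subseteq\mathcal F_{d,k}$ and an equivalence class $E$, let $E^{\cap A}:=\{G\in E: A\subseteq G\}$. Let $E_*$ be an optimal equivalence class, let $G^*\in E_*^{\cap A}$, and suppose there is an equivalence class $\tilde E\in\mathcal E_{d,k}$ with $\tilde E\neq E_*$, $\mathcal S(\tilde E)\ge\mathcal S^*-\gamma$ and $\tilde E^{\cap A}\neq\emptyset$. Then there exists a graph $\tilde G\in\tilde E^{\cap A}$ such that the families of all the variables in $V$ are the same in $G^*$ and in $\tilde G$.
   Context: $\mathbf X=(X_1,\dots,X_d)$ is a random vector; $k$ a fixed positive integer. A family is $\langle X_i,\Pi\rangle$ with $\Pi\subseteq\mathbf X\setminus\{X_i\}$, $|\Pi|\le k$, and $H(\langle X_i,\Pi\rangle)=H(X_i\mid\Pi)$; $\mathcal F_{d,k}$ is the set of families. $\mathcal G_{d,k}$ = DAGs over $\mathbf X$ with in-degree $\le k$, identified with their family sets; $\mathcal S(F)=-\sum_{f\in F}H(f)$; $\mathcal S^*=\max_{G\in\mathcal G_{d,k}}\mathcal S(G)$. $\mathcal E_{d,k}$ is the set of Markov equivalence classes (ECs) on $\mathcal G_{d,k}$ (DAGs with the same conditional independence constraints), which share a score $\mathcal S(E)$; an optimal EC has score $\mathcal S^*$. For $V\subseteq\mathbf X$, $\mathcal G_V$ is the set of DAGs over $V$ with in-degree at most $k$. $(\gamma,V)$-stable: for $\gamma>0$ and $V\subseteq\mathbf X$, (1) in every $G\in\mathcal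 G_{d,k}$ with $\mathcal S(G)\ge\mathcal S^*-\gamma$ all parents of every variable in $V$ are in $V$; (2) for the marginal distribution on $V$ (over $\mathcal G_V$) there is a unique optimal EC and the score gap between the best and second-best EC is more than $\gamma$. *)

(* Defs.v *)
From HB Require Import structures.
From mathcomp Require Import all_boot all_order all_algebra.
From mathcomp Require Import reals exp.
Set Implicit Arguments. Unset Strict Implicit. Unset Printing Implicit Defensive.
Import Order.TTheory GRing.Theory Num.Theory.
Local Open Scope ring_scope.

Section BN.
Variable R : realType.
Variable I : finType.
Variable Al : finType.  (* common finite alphabet of the variables *)

Definition outcome := {ffun I -> Al}.
Definition is_dist (P : outcome -> R) : Prop :=
  (forall x, 0 <= P x) /\ \sum_x P x = 1.

Definition marg (P : outcome -> R) (S : {set I}) (x : outcome) : R :=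
  \sum_(z : outcome | [forall i in S, z i == x i]) P z.

Definition condH (P : outcome -> R) (i : I) (Pi : {set I}) : R :=
  - \sum_x P x * ln (marg P (i |: Pi) x / marg P Pi x).

(* A directed graph is given by its parent sets. *)
Definition graph := {ffun I -> {set I}}.

Definition edge (G : graph) : rel I := fun u v => u \in G v.

Definition acyclic (G : graph) : bool :=
  [forall u, forall v, (u \in G v) ==> ~~ connect (edge G) v u].

Definition dagb (k : nat) (G : graph) : bool :=
  acyclic G && [forall v, (#|G v| <= k)%N].

Definition famset (G : graph) : {set I * {set I}} := [set (v, G v) | v : I].

Definition is_family (k : nat) (f : I * {set I}) : bool :=
  (f.1 \notin f.2) && (#|f.2| <= k)%N.

Definition score (P : outcome -> R) (G : graph) : R :=
  - \sum_v condH P v (G v).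

Definition empty_graph : graph := [ffun _ => set0].

Definition Sstar (P : outcome -> R) (k : nat) : R :=
  \big[Num.max/score P empty_graph]_(G : graph | dagb k G) score P G.

Definition adj (G : graph) : rel I := fun u v => (u \in G v) || (v \in G u).

Definition is_path (G : graph) (a b : I) (s : seq I) : bool :=
  path (adj G) a s && (last a s == b) && uniq (a :: s).

Definition active (G : graph) (C : {set I}) (a : I) (s : seq I) : Prop :=
  let full := a :: s in
  forall j, (j.+2 < size full)%N ->
    let u := nth a full j in
    let v := nth a full j.+1 in
    let w := nth a full j.+2 in
    if (u \in G v) && (w \in G v)
    then exists2 c, c \in C & connect (edge G) v c
    else v \notin C.

Definition dsep (G : graph) (A B C : {set I}) : Prop :=
  forall a b, a \in A -> b \in B ->
    forall s, is_path G a b s -> ~ active G C a s.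

Definition markov_equiv (G1 G2 : graph) : Prop :=
  forall A B C : {set I}, [disjoint A & B] -> [disjoint A & C] -> [disjoint B & C] ->
    (dsep G1 A B C <-> dsep G2 A B C).

End BN.

Definition margV (R : realType) (I Al : finType) (P : outcome I Al -> R) (V : {set I})
  (y : outcome {i : I | i \in V} Al) : R :=
  \sum_(z : outcome I Al | [forall i : {i : I | i \in V}, z (val i) == y i]) P z.

Arguments margV {R I Al} P V y.

Definition stable (R : realType) (I Al : finType) (k : nat) (P : outcome I Al -> R)
  (gamma : R) (V : {set I}) : Prop :=
  (forall G : graph I, dagb k G -> Sstar P k - gamma <= score P G ->
     forall v, v \in V -> G v \subset V) /\
  (exists G0 : graph {i : I | i \in V},
     [/\ dagb k G0, score (margV P V) G0 = Sstar (margV P V) k &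
        forall G : graph {i : I | i \in V}, dagb k G -> ~ markov_equiv G G0 ->
          score (margV P V) G < Sstar (margV P V) k - gamma]).

(* Main.v *)
Require Import Defs.
From HB Require Import structures.
From mathcomp Require Import all_boot all_order all_algebra.
From mathcomp Require Import reals exp.
From mathcomp Require Import zify lra.
From Stdlib Require Classical_Prop.
Import Order.TTheory GRing.Theory Num.Theory.

Set Implicit Arguments. Unset Strict Implicit. Unset Printing Implicit Defensive.

Section Walks.
Variable I : finType.
Implicit Types (G : graph I) (C : {set I}).

Definition anc G C v := [exists c in C, connect (edge G) v c].
Definition strt G C (u v w : I) : bool :=
  if (u \in G v) && (w \in G v) then v \in C else v \notin C.
Definition relt G C (u v w : I) : bool :=
  if (u \in G v) && (w \in G v) then anc G C v else v \notin C.

Fixpoint wk G (Q : I -> I -> I -> bool) (t : seq I) : bool :=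
  match t with
  | x :: t1 =>
    match t1 with
    | y :: t2 => [&& adj G x y, (match t2 with z :: _ => Q x y z | [::] => true end) & wk G Q t1]
    | [::] => true
    end
  | [::] => true
  end.

#[global] Arguments wk : simpl never.

Definition tq (Q : I -> I -> I -> bool) x y (t : seq I) :=
  match t with z :: _ => Q x y z | [::] => true end.

Lemma wkE G Q x y t : wk G Q (x :: y :: t) = [&& adj G x y, tq Q x y t & wk G Q (y :: t)].
Proof. by []. Qed.
Lemma wk1 G Q x : wk G Q [:: x]. Proof. by []. Qed.
Lemma wk0 G Q : wk G Q [::]. Proof. by []. Qed.

Definition jn (Q : I -> I -> I -> bool) (p : seq I) (y : I) (r : seq I) :=
  match p, r with
  | _ :: _, z :: _ => Q (last y p) y z
  | _, _ => true
  end.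

Lemma wk_cat G Q p y r :
  wk G Q (p ++ y :: r) = [&& wk G Q (rcons p y), wk G Q (y :: r) & jn Q p y r].
Proof.
elim: p => [|u p IH]; first by rewrite /= andbT.
case: p IH => [|u' p''] IH.
  clear IH; case: r => [|z r]; rewrite /= ?wkE ?wk1 /jn /tq /= ?andbT //.
  by case: (adj G u y); case: (Q u y z); rewrite /= ?andbT ?andbF.
rewrite [(u :: u' :: p'') ++ _]/= [rcons _ _]/= !wkE -cat_cons IH.
have -> : tq Q u u' (p'' ++ y :: r) = tq Q u u' (rcons p'' y) by clear IH; case: p''.
have -> : jn Q [:: u, u' & p''] y r = jn Q (u' :: p'') y r by [].
by case: (adj G u u'); case: (tq Q u u' (rcons p'' y));
   case: (wk G Q (rcons (u' :: p'') y)); case: (wk G Q (y :: r)).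
Qed.


Lemma wk_path G Q a s : wk G Q (a :: s) -> path (adj G) a s.
Proof.
elim: s a => [|y s IH] a //=.
by rewrite wkE => /and3P [-> _ /IH].
Qed.

Lemma wk_nth G (Q : I -> I -> I -> bool) t x0 : wk G Q t ->
  forall j, j.+2 < size t -> Q (nth x0 t j) (nth x0 t j.+1) (nth x0 t j.+2).
Proof.
elim: t => [|x t IH] //.
case: t IH => [|y t] IH //.
rewrite wkE => /and3P [_ hq /IH hw] [|j] /=.
  by case: t hq IH hw => [|z t] //.
rewrite ltnS => hj; exact: hw.
Qed.

Lemma nth_wk G (Q : I -> I -> I -> bool) a s x0 : path (adj G) a s ->
  (forall j, j.+2 < size (a :: s) -> Q (nth x0 (a :: s) j) (nth x0 (a :: s) j.+1) (nth x0 (a :: s) j.+2)) ->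
  wk G Q (a :: s).
Proof.
elim: s a => [|y s IH] a //=.
move=> /andP [hay hp] hQ.
rewrite wkE hay /=; apply/andP; split.
  by case: s hQ {IH hp} => [|z s] // hQ; apply: (hQ 0).
apply: IH => // j hj; exact: (hQ j.+1).
Qed.

Lemma reltP G C u v w :
  reflect (if (u \in G v) && (w \in G v) then exists2 c, c \in C & connect (edge G) v c
           else v \notin C) (relt G C u v w).
Proof.
rewrite /relt; case: ifP => _; last exact: idP.
exact: exists_inP.
Qed.

Lemma active_wk G C a s : path (adj G) a s ->
  (active G C a s <-> wk G (relt G C) (a :: s)).
Proof.
move=> hp; split.
  move=> ha; apply: (nth_wk (x0:=a)) => // j hj; apply/reltP; exact: ha.
move=> hw full j hj; have /reltP := wk_nth a hw hj; exact.
Qed.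

Lemma anc_edge G C u v : u \in G v -> anc G C v -> anc G C u.
Proof.
move=> huv /exists_inP [c hc hvc]; apply/exists_inP; exists c => //.
apply: connect_trans hvc; exact: connect1.
Qed.

Lemma anc_of G C t x : wk G (relt G C) (x :: t) -> x \in G (head x t) ->
  ~~ path (fun z z' => z \in G z') x t -> anc G C x.
Proof.
elim: t x => [|y t IH] x; first by move=> _ _ /negP h; exfalso; apply: h.
move=> hw /= hxy; rewrite hxy /=.
case: t IH hw => [|y' t] IH hw //=.
move: hw; rewrite wkE => /and3P [_ hq hw'].
move=> hp.
case hyy: (y \in G y').
  apply: anc_edge hxy _; apply: IH => //.
have hy'y : y' \in G y.
  by move: hw'; rewrite wkE /adj hyy => /and3P [].
move: hq; rewrite /tq /relt hxy hy'y /= => hq; exact: anc_edge hxy hq.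
Qed.


Lemma path_head (e : rel I) x q y : path e x (rcons q y) -> e x (head y q).
Proof. by case: q => [|z q] /= => [/andP []|/andP []]. Qed.

Lemma shortcut G C p x q r :
  wk G (relt G C) (p ++ x :: q ++ x :: r) -> wk G (relt G C) (p ++ x :: r).
Proof.
rewrite wk_cat => /and3P [h1 h2 h3].
move: h2; rewrite -cat_cons wk_cat => /and3P [h4 h5 h6].
rewrite wk_cat h1 h5 /=.
case: p h1 h3 => [|u p] // h1 h3.
case: r h3 h5 h6 => [|z r] // h3 h5 h6.
rewrite /jn in h3 h6 *.
set U := last x (u :: p) in h3 *.
have {h3} h3 : relt G C U x (head x q) by case: q h4 h6 h3.
rewrite [last x (x :: q)]/= in h6.
rewrite [rcons (x :: q) x]/= in h4.
have hp := wk_path h4.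
have ha1 : adj G x (head x q) := path_head hp.
have ha2 : adj G (last x q) x by move: hp; rewrite rcons_path => /andP [].
move: h3 h6; rewrite /relt.
case hU: (U \in G x); case hz: (z \in G x) => /=; last first.
- by case: (head x q \in G x) => //=; case: (last x q \in G x).
- by case: (head x q \in G x) => //=; case: (last x q \in G x).
- by case: (head x q \in G x) => //=; case: (last x q \in G x).
case hh: (head x q \in G x) => // hxC.
case hl: (last x q \in G x) => // _.
apply: (anc_of h4).
  rewrite /=; move: ha1; rewrite /adj hh orbF.
  by case: q {h4 hp ha2 hl hh} => [|w q].
rewrite rcons_path negb_and; apply/orP; right; exact: negbT.
Qed.

Lemma not_uniq_split (t : seq I) : ~~ uniq t ->
  exists p x q r, t = p ++ x :: q ++ x :: r.
Proof.
elim: t => [|y t IH] //=.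
rewrite negb_and negbK => /orP [/splitPr [q r] | /IH [p [x [q [r ->]]]]].
  by exists [::], y, q, r.
by exists (y :: p), x, q, r.
Qed.

Lemma rel_uniq G C n a s : size s < n -> wk G (relt G C) (a :: s) ->
  exists s', [/\ wk G (relt G C) (a :: s'), uniq (a :: s') & last a s' = last a s].
Proof.
elim: n a s => [|n IH] a s //.
move=> hs hw.
case hu: (uniq (a :: s)); first by exists s.
have [p [x [q [r hpq]]]] := not_uniq_split (negbT hu).
have hw' : wk G (relt G C) (p ++ x :: r) by apply: (shortcut (q:=q)); rewrite -hpq.
case: p hpq hw' => [|a' p] /= [<-] hs'.
  move=> hw'; have [|s' [h1 h2 h3]] := IH a r _ hw'.
    by move: hs; rewrite hs' size_cat /=; lia.
  by exists s'; rewrite h3 hs' last_cat.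
move=> hw'; have [|s' [h1 h2 h3]] := IH a (p ++ x :: r) _ hw'.
  by move: hs; rewrite hs' !size_cat /= size_cat /=; lia.
by exists s'; rewrite h3 hs' !last_cat /= last_cat.
Qed.

Lemma rel_to_active G C a b s : wk G (relt G C) (a :: s) -> last a s = b ->
  exists s', is_path G a b s' /\ active G C a s'.
Proof.
move=> hw hl.
have [s' [h1 h2 h3]] := rel_uniq (n := (size s).+1) (ltnSn _) hw.
exists s'; have hp := wk_path h1.
split; last by apply/active_wk.
by rewrite /is_path hp h2 h3 hl eqxx.
Qed.


Fixpoint dd (v : I) (p : seq I) : seq I :=
  match p with [::] => [:: v] | x :: p1 => v :: rcons (dd x p1) v end.

Lemma last_dd x v p : last x (dd v p) = v.
Proof. by case: p => [|y p] //=; rewrite last_rcons. Qed.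

Lemma chain_of G C v : anc G C v -> v \notin C ->
  exists p, [/\ path (edge G) v p, p != [::], last v p \in C & all (fun z => z \notin C) (belast v p)].
Proof.
move=> /exists_inP [c hc /connectP [p hp hl]] hv.
elim: p v hp hl hv => [|x p IH] v /=; first by move=> _ <-; rewrite hc.
move=> /andP [hvx hp] hl hv.
case hx: (x \in C).
  by exists [:: x]; rewrite /= hvx hx hv.
have [p' [h1 h2 h3 h4]] := IH x hp hl (negbT hx).
by exists (x :: p'); rewrite /= hvx h1 h3 hv h4.
Qed.


Lemma dd_ok G C (n2c : forall u v, u \in G v -> v \notin G u) p v u w :
  path (edge G) v p -> p != [::] -> last v p \in C ->
  all (fun z => z \notin C) (belast v p) -> adj G u v -> adj G v w ->
  wk G (strt G C) (u :: dd v p ++ [:: w]).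
Proof.
elim: p v u w => [|x1 p1 IH] v u w //= /andP [hvx hp] _ hl /andP [hv hb] huv hvw.
have hxv : x1 \notin G v := n2c _ _ hvx.
have hvx' : v \in G x1 := hvx.
have ha1 : adj G v x1 by rewrite /adj hvx'.
have ha2 : adj G x1 v by rewrite /adj hvx' orbT.
case: p1 IH hp hl hb => [|x2 p2] IH hp hl hb.
  rewrite /= in hl; rewrite /= !wkE /tq /strt huv hvw ha1 ha2 hvx' (negbTE hxv) !andbF /= hl hv.
  by rewrite /=.
have hx1 : x1 \notin C by case/andP: hb.
have := IH x1 v v hp isT hl hb ha1 ha2.
rewrite [dd x1 _]/=; set E := dd x2 p2 => hyp.
have e1 : v :: (x1 :: rcons E x1) ++ [:: v] = (v :: x1 :: E) ++ x1 :: [:: v].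
  by rewrite /= cat_rcons.
have e2 : u :: v :: rcons (x1 :: rcons E x1) v ++ [:: w] = (u :: v :: x1 :: E) ++ x1 :: [:: v; w].
  by rewrite /= -!cats1 -!catA.
move: hyp; rewrite e1 e2 !wk_cat => /and3P [h1 _ h3].
apply/and3P; split.
- rewrite [rcons (u :: _) _]/= wkE; rewrite [rcons (v :: _) _]/= in h1.
  by rewrite huv h1 /tq /strt (negbTE hxv) andbF hv.
- by rewrite !wkE /tq /strt ha2 hvw (negbTE hxv) /= hv.
- exact: h3.
Qed.


Lemma rel_to_str G C (n2c : forall u v, u \in G v -> v \notin G u) s u v :
  wk G (relt G C) (u :: v :: s) ->
  exists s', wk G (strt G C) (u :: v :: s') /\ last v s' = last v s.
Proof.
elim: s u v => [|w s1 IH] u v.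
  by move=> h; exists [::]; move: h; rewrite !wkE.
rewrite wkE => /and3P [huv hq hw].
have [s1' [h1 h2]] := IH _ _ hw.
move: (h1); rewrite wkE => /and3P [hvw hq' hw'].
case hs: (strt G C u v w).
  by exists (w :: s1'); rewrite wkE huv /tq hs h1 /= h2.
rewrite /tq /relt /strt in hq hs; move: hq hs.
case: ifP => // hcol hanc /negbT hvC.
have [[|x1 p1] [hp hpn hl hb]] := chain_of hanc hvC => //.
exists (rcons (dd x1 p1) v ++ w :: s1'); split; last first.
  by rewrite last_cat /= h2.
have -> : u :: v :: rcons (dd x1 p1) v ++ w :: s1' = (u :: dd v (x1 :: p1)) ++ w :: s1' by [].
rewrite wk_cat; apply/and3P; split => //.
- by rewrite -cats1 cat_cons; exact: (dd_ok n2c hp hpn hl hb huv hvw).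
- case: s1' h1 {h2 hw' hq'} => [|z s2] //= h1.
  by rewrite /jn last_rcons; move: h1; rewrite wkE => /and3P [].
by rewrite hanc in hvC.
Qed.

Lemma rel_to_str_walk G C (n2c : forall u v, u \in G v -> v \notin G u) a s :
  wk G (relt G C) (a :: s) ->
  exists s', wk G (strt G C) (a :: s') /\ last a s' = last a s.
Proof.
case: s => [|v s]; first by exists [::].
move=> /(rel_to_str n2c) [s' [h1 h2]]; exists (v :: s'); by rewrite /= h2.
Qed.

Lemma str_to_rel G C t : wk G (strt G C) t -> wk G (relt G C) t.
Proof.
elim: t => [|x t IH] //; case: t IH => [|y t] IH //.
rewrite !wkE => /and3P [-> hq /IH ->]; rewrite andbT.
move: hq; rewrite /tq; case: t {IH} => [|z t] //.
rewrite /strt /relt; case: ifP => // _ hv.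
by apply/exists_inP; exists y => //; rewrite connect0.
Qed.



Lemma wk_rcons_inv G (Q : I -> I -> I -> bool) a s w : wk G Q (rcons (a :: s) w) ->
  [/\ wk G Q (a :: s), adj G (last a s) w & (s != [::] -> exists u, Q u (last a s) w)].
Proof.
case/lastP: s => [|S x]; first by rewrite /= wkE => /and3P [].
have -> : rcons (a :: rcons S x) w = (a :: S) ++ x :: [:: w] by rewrite /= -!cats1 -!catA.
rewrite wk_cat last_rcons => /and3P [h1 h2 h3]; split.
- exact: h1.
- by move: h2; rewrite wkE => /and3P [].
- by move=> _; exists (last x (a :: S)); move: h3.
Qed.

Lemma wk_rcons_intro G (Q : I -> I -> I -> bool) a s w : wk G Q (a :: s) ->
  adj G (last a s) w -> (forall u, Q u (last a s) w) -> wk G Q (rcons (a :: s) w).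
Proof.
case/lastP: s => [|S x]; first by rewrite /= wkE => _ ->.
have -> : rcons (a :: rcons S x) w = (a :: S) ++ x :: [:: w] by rewrite /= -!cats1 -!catA.
rewrite last_rcons wk_cat => h1 h2 h3; apply/and3P; split.
- exact: h1.
- by rewrite wkE h2.
- exact: h3.
Qed.

Lemma split_first (V : {set I}) (s : seq I) :
  all (fun x => x \in V) s \/
  exists seg w r, [/\ s = seg ++ w :: r, all (fun x => x \in V) seg & w \notin V].
Proof.
elim: s => [|y s [IH | [seg [w [r [-> h1 h2]]]]]]; first by left.
- case hy: (y \in V); first by left; rewrite /= hy.
  by right; exists [::], y, s; rewrite hy.
- case hy: (y \in V); last by right; exists [::], y, (seg ++ w :: r); rewrite hy.
  by right; exists (y :: seg), w, r; rewrite /= hy h1.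
Qed.

Section Transfer.
Variables (G1 G2 : graph I) (V C : {set I}).
Hypothesis hout : forall v, v \notin V -> G1 v = G2 v.
Hypothesis hin1 : forall v, v \in V -> G1 v \subset V.
Hypothesis hin2 : forall v, v \in V -> G2 v \subset V.
Hypothesis hseg : forall a s, a \in V -> all (fun x => x \in V) s -> a \notin C ->
  last a s \notin C -> wk G1 (strt G1 C) (a :: s) ->
  exists s', wk G2 (strt G2 C) (a :: s') /\ last a s' = last a s.

Lemma E1 a z : a \notin V -> (a \in G1 z) = (a \in G2 z).
Proof.
move=> ha; case hz: (z \in V); last by rewrite hout ?hz.
apply/idP/idP => h; [have := subsetP (hin1 hz) _ h | have := subsetP (hin2 hz) _ h];
  by rewrite (negbTE ha).
Qed.

Lemma E2 x z : z \notin V -> (x \in G1 z) = (x \in G2 z).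
Proof. by move=> hz; rewrite hout. Qed.

Lemma notin1 x a : x \in V -> a \notin V -> a \notin G1 x.
Proof. by move=> hx ha; apply/negP => /(subsetP (hin1 hx)); rewrite (negbTE ha). Qed.
Lemma notin2 x a : x \in V -> a \notin V -> a \notin G2 x.
Proof. by move=> hx ha; apply/negP => /(subsetP (hin2 hx)); rewrite (negbTE ha). Qed.

Lemma transfer n a s : size s < n -> wk G1 (strt G1 C) (a :: s) -> last a s \notin C ->
  a \notin V \/ a \notin C ->
  exists s', [/\ wk G2 (strt G2 C) (a :: s'), last a s' = last a s &
                 (a \notin V -> ohead s' = ohead s)].
Proof.
elim: n a s => [|n IH] a s //.
move=> hs hw hl hor.
case haV: (a \in V); last first.
  have haV' : a \notin V by rewrite haV.
  case: s hs hw hl => [|z s1] hs hw hl; first by exists [::].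
  move: (hw); rewrite wkE => /and3P [haz htq hw1].
  have hzC : z \in V -> z \notin C.
    move=> hzV; case: s1 {hs hw hw1} hl htq => [|z' s1] //= _.
    by rewrite /tq /strt (negbTE (notin1 hzV haV')).
  have hzor : z \notin V \/ z \notin C.
    by case hzV: (z \in V); [right; apply: hzC | left].
  have [s1' [h1 h2 h3]] := IH z s1 hs hw1 hl hzor.
  exists (z :: s1'); split; [| by rewrite /= h2 | by []].
  rewrite wkE h1 andbT; apply/andP; split.
    by move: haz; rewrite /adj (E1 _ haV') (E2 _ haV').
  case hzV: (z \in V).
    case: s1' {h1 h2 h3} => [|b s1'] //=.
    by rewrite /tq /strt -(E1 _ haV') (negbTE (notin1 hzV haV')) /= hzC.
  move: (h3 (negbT hzV)) htq; case: s1' {h1 h2 h3} => [|b s1'] //.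
  case: s1 {hs hw hw1 hl} => [|b' s1] //= [<-].
  by rewrite /tq /strt -!(E2 _ (negbT hzV)).
have haC : a \notin C by case: hor => //; rewrite haV.
  have [hall | [seg [w [r [es hseg' hwV]]]]] := split_first V s.
    have [s' [h1 h2]] := hseg haV hall haC hl hw.
    by exists s'; split.
  subst s.
  move: (hw); rewrite -cat_cons wk_cat => /and3P [hw1 hw2 hw3].
  have [hwseg hxw htr] := wk_rcons_inv hw1.
  have hxV : last a seg \in V.
    by case/lastP: seg hseg' {hw hs hl hw1 hw3 hxw htr hwseg} => [|S x] //; rewrite last_rcons all_rcons => /andP [].
  have hxC : last a seg \notin C.
    case: seg {hseg' hw hs hl hw1 hw3 hxw hwseg} hxV htr => [|y seg] //= hxV /(_ isT) [u].
    by rewrite /strt (negbTE (notin1 hxV hwV)) andbF.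
  have hsz : size r < n by move: hs; rewrite size_cat /=; lia.
  have hlw : last w r \notin C by move: hl; rewrite last_cat.
  have [r' [h1 h2 h3]] := IH w r hsz hw2 hlw (or_introl hwV).
  have [seg' [g1 g2]] := hseg haV hseg' haC hxC hwseg.
  exists (seg' ++ w :: r'); split => //; last by rewrite !last_cat g2 /= h2.
  rewrite -cat_cons wk_cat; apply/and3P; split => //.
  - apply: wk_rcons_intro => //; rewrite g2.
      by move: hxw; rewrite /adj (E2 _ hwV) (negbTE (notin1 hxV hwV)) (negbTE (notin2 hxV hwV)) !orbF.
    by move=> u; rewrite /strt (negbTE (notin2 hxV hwV)) andbF.
  - move: hw3; rewrite /jn /=.
    move: (h3 hwV); case: r' {h1 h2 h3} => [|z r'] //.
    destruct r as [|z' r0] => //= [[<-]].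
    by rewrite g2 /strt -!(E2 _ hwV).
Qed.

Lemma transfer_walk a s : wk G1 (strt G1 C) (a :: s) -> a \notin C -> last a s \notin C ->
  exists s', wk G2 (strt G2 C) (a :: s') /\ last a s' = last a s.
Proof.
move=> hw ha hl.
have [s' [h1 h2 _]] := transfer (n := (size s).+1) (ltnSn _) hw hl (or_intror ha).
by exists s'.
Qed.

Lemma dsep_transfer (A B : {set I}) : (forall u v, u \in G1 v -> v \notin G1 u) ->
  [disjoint A & C] -> [disjoint B & C] -> dsep G2 A B C -> dsep G1 A B C.
Proof.
move=> n2c hAC hBC hd a b ha hb s hp hact.
have hpa : path (adj G1) a s by case/andP: hp => /andP [].
have hlb : last a s = b by case/andP: hp => /andP [_ /eqP].
have hw := (active_wk C hpa).1 hact.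
have [s1 [hw1 hl1]] := rel_to_str_walk n2c hw.
have haC : a \notin C by rewrite (disjointFr hAC ha).
have hbC : b \notin C by rewrite (disjointFr hBC hb).
have hl1' : last a s1 \notin C by rewrite hl1 hlb.
have [s2 [hw2 hl2]] := transfer_walk hw1 haC hl1'.
have [s3 [hp3 hact3]] := rel_to_active (str_to_rel hw2) (etrans hl2 (etrans hl1 hlb)).
exact: hd a b ha hb s3 hp3 hact3.
Qed.

End Transfer.

End Walks.

Section Sub.
Variables (I : finType) (V : {set I}).
Local Notation sub := {i : I | i \in V}.

Definition restrict (G : graph I) : graph sub := [ffun j => [set i | val i \in G (val j)]].
Definition Csub (C : {set I}) : {set sub} := [set i | val i \in C].

Lemma restrictE G i j : (i \in restrict G j) = (val i \in G (val j)).
Proof. by rewrite ffunE inE. Qed.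

Lemma wk_map G C (ts : seq sub) :
  wk (restrict G) (strt (restrict G) (Csub C)) ts = wk G (strt G C) (map val ts).
Proof.
elim: ts => [|x t IH] //; case: t IH => [|y t] IH //.
rewrite !wkE -IH /adj !restrictE; congr [&& _, _ & _].
by case: t {IH} => [|z t] //=; rewrite /tq /strt !restrictE inE.
Qed.

Lemma map_pmap (t : seq I) : all (fun x => x \in V) t -> map (val : sub -> I) (pmap insub t) = t.
Proof.
elim: t => [|x t IH] //= /andP [hx ht].
by case: insubP => [u _ hu|] /=; [rewrite hu IH | rewrite hx].
Qed.

Lemma n2c_restrict (G : graph I) : (forall u v, u \in G v -> v \notin G u) ->
  forall u v : sub, u \in restrict G v -> v \notin restrict G u.
Proof. by move=> h u v; rewrite !restrictE; apply: h. Qed.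

Lemma hseg_of (G1 G2 : graph I) (C : {set I}) :
  markov_equiv (restrict G1) (restrict G2) ->
  (forall u v, u \in G2 v -> v \notin G2 u) ->
  forall a s, a \in V -> all (fun x => x \in V) s -> a \notin C ->
  last a s \notin C -> wk G1 (strt G1 C) (a :: s) ->
  exists s', wk G2 (strt G2 C) (a :: s') /\ last a s' = last a s.
Proof.
move=> heq n2c a s haV hall haC hlC hw.
case hab: (a == last a s); first by exists [::]; rewrite /= -(eqP hab).
set a' : sub := Sub a haV.
set ts := pmap (insub : I -> option sub) s.
have hmap : map val (a' :: ts) = a :: s by rewrite /= map_pmap.
have hw' : wk (restrict G1) (strt (restrict G1) (Csub C)) (a' :: ts) by rewrite wk_map hmap.
set b' := last a' ts.
have hb' : val b' = last a s.
  have := last_map (val : sub -> I) ts a'; rewrite /ts map_pmap // => <-; by [].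
have [s1 [hp1 ha1]] := rel_to_active (str_to_rel hw') (erefl b').
have hnd : ~ dsep (restrict G2) [set a'] [set b'] (Csub C).
  have hd1 : [disjoint [set a'] & [set b']].
    rewrite disjoints1 inE; apply/negP => /eqP /(congr1 val) /= hab'.
    have e : a = last a s by rewrite -hb'; exact: hab'.
    by rewrite -e eqxx in hab.
  have hd2 : [disjoint [set a'] & Csub C] by rewrite disjoints1 inE.
  have hd3 : [disjoint [set b'] & Csub C] by rewrite disjoints1 inE hb'.
  move=> hd; move: (proj2 (heq _ _ _ hd1 hd2 hd3) hd).
  by move=> /(_ a' b'); rewrite !inE !eqxx => /(_ isT isT s1 hp1).
have [s2 [hp2 ha2]] : exists s2, is_path (restrict G2) a' b' s2 /\ active (restrict G2) (Csub C) a' s2.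
  apply: Classical_Prop.NNPP => hno; apply: hnd => x y; rewrite !inE => /eqP -> /eqP -> s2 hp2 ha2.
  by apply: hno; exists s2.
have hpa : path (adj (restrict G2)) a' s2 by case/andP: hp2 => /andP [].
have hlb : last a' s2 = b' by case/andP: hp2 => /andP [_ /eqP].
have [s3 [hw3 hl3]] := rel_to_str_walk (n2c_restrict n2c) ((active_wk _ hpa).1 ha2).
exists (map val s3); split.
  by move: hw3; rewrite wk_map.
by rewrite -hb' -hlb -hl3 -[last _ (map _ _)]/(last (val a') (map val s3)) last_map.
Qed.

End Sub.

Lemma acyc_n2c (J : finType) (G : graph J) : acyclic G -> forall u v, u \in G v -> v \notin G u.
Proof.
move=> /forallP hG u v huv; apply/negP => hvu.
have := forallP (hG u) v; rewrite huv /= => /negP; apply.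
exact: connect1.
Qed.

Lemma acyclicP (J : finType) (G : graph J) : (forall u v, u \in G v -> connect (edge G) v u -> False) -> acyclic G.
Proof.
move=> h; apply/forallP => u; apply/forallP => v; apply/implyP => huv; apply/negP; exact: h.
Qed.

Section Graphs.
Variables (I : finType) (V : {set I}).
Local Notation sub := {i : I | i \in V}.

Definition comb (F1 F2 : graph I) : graph I := [ffun v => if v \in V then F1 v else F2 v].
Definition liftG (G0 : graph sub) : graph I :=
  [ffun v => if insub v is Some j then [set val i | i in G0 j] else set0].

Lemma combE (F1 F2 : graph I) v : comb F1 F2 v = if v \in V then F1 v else F2 v.
Proof. by rewrite ffunE. Qed.

Lemma acyclic_comb (F1 F2 : graph I) : (forall v, v \in V -> F1 v \subset V) -> acyclic F1 -> acyclic F2 ->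
  acyclic (comb F1 F2).
Proof.
move=> hin /forallP a1 /forallP a2; apply: acyclicP => u v huv /connectP [p hp hl].
have pathV : forall p x, path (edge (comb F1 F2)) x p -> last x p \in V ->
    x \in V /\ path (edge F1) x p.
  elim=> [|y p' IH] x //=; move=> /andP [hxy hp'] hl'.
  have [hy hp1] := IH _ hp' hl'.
  move: hxy; rewrite /edge combE hy => hxy.
  by split; [exact: (subsetP (hin _ hy)) | rewrite /edge hxy].
have pathO : forall p x, x \notin V -> path (edge (comb F1 F2)) x p -> path (edge F2) x p.
  elim=> [|y p' IH] x //= hx /andP [hxy hp'].
  case hy: (y \in V).
    by move: hxy; rewrite /edge combE hy => /(subsetP (hin _ hy)); rewrite (negbTE hx).
  move: hxy; rewrite /edge combE hy => hxy; rewrite hxy /=.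
  exact: IH (negbT hy) hp'.
case hv: (v \in V).
  have hu : u \in V by move: huv; rewrite combE hv => /(subsetP (hin _ hv)).
  have hlV : last v p \in V by rewrite -hl.
  have [_ hp1] := pathV p v hp hlV.
  move: huv; rewrite combE hv => huv.
  have := forallP (a1 u) v; rewrite huv /= => /negP; apply.
  by apply/connectP; exists p.
have hp2 := pathO p v (negbT hv) hp.
move: huv; rewrite combE hv => huv.
have := forallP (a2 u) v; rewrite huv /= => /negP; apply.
by apply/connectP; exists p.
Qed.

Lemma lift_val (G0 : graph sub) (i j : sub) : (val i \in liftG G0 (val j)) = (i \in G0 j).
Proof. by rewrite ffunE valK mem_imset //; exact: val_inj. Qed.

Lemma lift_in (G0 : graph sub) u v : u \in liftG G0 v -> (u \in V) && (v \in V).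
Proof.
rewrite ffunE; case: insubP => [j hv _|]; last by rewrite inE.
by case/imsetP => i _ ->; rewrite hv (valP i).
Qed.

Lemma lift_sub (G0 : graph sub) v : v \in V -> liftG G0 v \subset V.
Proof. by move=> _; apply/subsetP => u /lift_in /andP []. Qed.

Lemma lift_at (G0 : graph sub) (j : sub) : liftG G0 (val j) = [set val i | i in G0 j].
Proof. by rewrite ffunE valK. Qed.

Lemma acyclic_lift (G0 : graph sub) : acyclic G0 -> acyclic (liftG G0).
Proof.
move=> /forallP a0; apply: acyclicP => u v huv /connectP [p hp hl].
have /andP [hu hv] := lift_in huv.
pose j0 : sub := Sub v hv.
have key : forall p x, x \in V -> path (edge (liftG G0)) x p ->
    connect (edge G0) (insubd j0 x) (insubd j0 (last x p)).
  elim=> [|y p' IH] x hx //= /andP [hxy hp'].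
  have /andP [_ hy] := lift_in hxy.
  apply: connect_trans (IH _ hy hp').
  apply: connect1; rewrite /edge.
  by rewrite -lift_val !val_insubd hx hy.
have := forallP (a0 (insubd j0 u)) (insubd j0 v).
rewrite -lift_val !val_insubd hu hv huv /= => /negP; apply.
by rewrite hl; exact: key.
Qed.

Lemma acyclic_restrict (G : graph I) : acyclic G -> acyclic (restrict V G).
Proof.
move=> /forallP a; apply: acyclicP => u v huv /connectP [p hp hl].
have key : forall p (x : sub), path (edge (restrict V G)) x p -> path (edge G) (val x) (map val p).
  by elim=> [|y p' IH] x //= /andP [hxy /IH ->]; rewrite andbT /edge -restrictE.
have := forallP (a (val u)) (val v); rewrite -restrictE huv /= => /negP; apply.
apply/connectP; exists (map val p); first exact: key.
by rewrite last_map hl.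
Qed.

Lemma card_restrict (G : graph I) j : #|restrict V G j| <= #|G (val j)|.
Proof.
rewrite -(card_imset _ val_inj); apply: subset_leq_card.
by apply/subsetP => x /imsetP [i hi ->]; rewrite -restrictE.
Qed.

Lemma restrict_lift (G0 : graph sub) : restrict V (liftG G0) = G0.
Proof. by apply/ffunP => j; apply/setP => i; rewrite restrictE lift_val. Qed.

Lemma imset_restrict (G : graph I) (j : sub) : G (val j) \subset V ->
  [set val i | i in restrict V G j] = G (val j).
Proof.
move=> hs; apply/setP => x; apply/imsetP/idP => [[i hi ->] | hx]; first by rewrite -restrictE.
have hxV := subsetP hs _ hx.
by exists (Sub x hxV) => //; rewrite restrictE.
Qed.

End Graphs.

Local Open Scope ring_scope.

Section Score.
Variables (R : realType) (I Al : finType) (P : outcome I Al -> R) (V : {set I}).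
Local Notation sub := {i : I | i \in V}.

Definition restrO (z : outcome I Al) : outcome sub Al := [ffun i => z (val i)].

Lemma margV_sum (Q : pred (outcome sub Al)) (g : outcome sub Al -> R) :
  \sum_(y | Q y) margV P V y * g y = \sum_(z | Q (restrO z)) P z * g (restrO z).
Proof.
rewrite /margV.
under eq_bigr do rewrite big_distrl /=.
have e : forall (y : outcome sub Al) (z : outcome I Al), [forall i : sub, z (val i) == y i] = (restrO z == y).
  move=> y z; apply/forallP/eqP => [h | <- i]; last by rewrite ffunE.
  by apply/ffunP => i; rewrite ffunE; apply/eqP.
under eq_bigr do under eq_bigl do rewrite e.
rewrite (exchange_big_dep predT) //= [RHS]big_mkcond /=.
apply: eq_bigr => z _.
case hQ: (Q (restrO z)).
  rewrite (big_pred1 (restrO z)) // => y /=.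
  by apply/andP/eqP => [[_ /eqP ->] | ->] //; rewrite hQ eqxx.
rewrite big_pred0 // => y; apply/andP => -[hy /eqP e']; by rewrite -e' hQ in hy.
Qed.

Lemma margV_sumT (g : outcome sub Al -> R) :
  \sum_y margV P V y * g y = \sum_z P z * g (restrO z).
Proof. exact: (margV_sum predT). Qed.

Lemma marg_restr (S : {set sub}) z :
  marg (margV P V) S (restrO z) = marg P [set val i | i in S] z.
Proof.
rewrite /marg.
under eq_bigr do rewrite -[margV _ _ _]mulr1.
rewrite margV_sum; under eq_bigr do rewrite mulr1.
apply: eq_bigl => z'.
apply/forallP/forallP => h x.
  apply/implyP => /imsetP [i hi ->].
  by have := implyP (h i) hi; rewrite !ffunE.
apply/implyP => hx; rewrite !ffunE.
by apply: (implyP (h (val x))); apply/imsetP; exists x.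
Qed.

Lemma condH_margV (j : sub) (S : {set sub}) :
  condH (margV P V) j S = condH P (val j) [set val i | i in S].
Proof.
rewrite /condH margV_sumT; congr (- _); apply: eq_bigr => z _.
by rewrite !marg_restr imsetU1.
Qed.

Definition SV (G : graph I) := \sum_(j : sub) condH P (val j) (G (val j)).
Definition SO (G : graph I) := \sum_(v | v \notin V) condH P v (G v).

Lemma score_split (G : graph I) : score P G = - SV G - SO G.
Proof.
by rewrite /score (bigID (fun v => v \in V)) /= big_sub opprD.
Qed.

Lemma score_marg_restrict (G : graph I) : (forall v, v \in V -> G v \subset V) ->
  score (margV P V) (restrict V G) = - SV G.
Proof.
move=> h; rewrite /score /SV; congr (- _); apply: eq_bigr => j _.
by rewrite condH_margV imset_restrict //; apply: h; exact: (valP j).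
Qed.

Lemma score_marg_lift (G0 : graph sub) : score (margV P V) G0 = - SV (liftG G0).
Proof.
rewrite /score /SV; congr (- _); apply: eq_bigr => j _.
by rewrite condH_margV lift_at.
Qed.

Lemma SV_comb (F1 F2 : graph I) : SV (comb V F1 F2) = SV F1.
Proof. by apply: eq_bigr => j _; rewrite combE (valP j). Qed.

Lemma SO_comb (F1 F2 : graph I) : SO (comb V F1 F2) = SO F2.
Proof. by apply: eq_bigr => v hv; rewrite combE (negbTE hv). Qed.

End Score.

Unset Implicit Arguments. Set Strict Implicit. Set Printing Implicit Defensive.

Theorem lemma5 (R : realType) (d k : nat) (Al : finType)
  (P : outcome 'I_d Al -> R) (gamma : R) (V : {set 'I_d})
  (A : {set 'I_d * {set 'I_d}}) (Gstar Gt : graph 'I_d) :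
  (0 < k)%N -> 0 < gamma -> is_dist P ->
  stable k P gamma V ->
  (forall f, f \in A -> is_family k f) ->
  (* E_* = class of Gstar is optimal, and Gstar lies in E_*^{cap A} *)
  dagb k Gstar -> score P Gstar = Sstar P k -> A \subset famset Gstar ->
  (* E~ = class of Gt: E~ <> E_*, S(E~) >= S^* - gamma, and Gt in E~^{cap A} *)
  dagb k Gt -> ~ markov_equiv Gt Gstar -> Sstar P k - gamma <= score P Gt ->
  A \subset famset Gt ->
  exists2 G : graph 'I_d,
    [/\ dagb k G, markov_equiv G Gt & A \subset famset G] &
    forall v, v \in V -> G v = Gstar v.
Proof.
move=> hk hg hP [st1 [G0 [hG0 hS0 hst2]]] hA hdS hSS hAS hdT hnT hST hAT.
have hSle : forall H, dagb k H -> score P H <= Sstar P k.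
  by move=> H hH; rewrite /Sstar; exact: le_bigmax_cond.
have hSS' : Sstar P k - gamma <= score P Gstar by rewrite hSS; lra.
have hinS := st1 Gstar hdS hSS'.
have hinT := st1 Gt hdT hST.
set L := liftG G0.
have hdL : acyclic L by apply: acyclic_lift; case/andP: hG0.
have hdeg : forall F : graph 'I_d, (forall v, (#|F v| <= k)%N) -> forall v, (#|comb V L F v| <= k)%N.
  move=> F hF v; rewrite combE; case: ifP => hv //.
  have := lift_at G0 (Sub v hv); rewrite /= => ->.
  apply: leq_trans (leq_imset_card _ _) _.
  by case/andP: hG0 => _ /forallP.
have hdcomb : forall F, dagb k F -> dagb k (comb V L F).
  move=> F /andP [aF /forallP dF]; apply/andP; split.
    exact: acyclic_comb (@lift_sub _ _ G0) hdL aF.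
  by apply/forallP; apply: hdeg.
have key : forall F, dagb k F -> (forall v, v \in V -> F v \subset V) ->
    Sstar P k - gamma <= score P F -> markov_equiv (restrict V F) G0.
  move=> F hF hFin hsc.
  apply: Classical_Prop.NNPP => hne.
  have hdr : dagb k (restrict V F).
    case/andP: hF => aF /forallP dF; apply/andP; split; first exact: acyclic_restrict.
    by apply/forallP => j; apply: leq_trans (card_restrict _ _) (dF _).
  have := hst2 _ hdr hne.
  rewrite -hS0 (@score_marg_restrict _ _ _ P V F hFin) (@score_marg_lift _ _ _ P V G0).
  have := hSle _ (hdcomb F hF); rewrite (@score_split _ _ _ P V) SV_comb SO_comb.
  move: hsc; rewrite (@score_split _ _ _ P V).
  rewrite -/L; lra.
have heqT := key Gt hdT hinT hST.
have heqS := key Gstar hdS hinS hSS'.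
set G := comb V Gstar Gt.
have hG_at : forall v, v \in V -> G v = Gstar v by move=> v hv; rewrite combE hv.
have hG_out : forall v, v \notin V -> Gt v = G v by move=> v hv; rewrite combE (negbTE hv).
have hGin : forall v, v \in V -> G v \subset V by move=> v hv; rewrite hG_at //; apply: hinS.
have aS : acyclic Gstar by case/andP: hdS.
have aT : acyclic Gt by case/andP: hdT.
have aG : acyclic G by apply: acyclic_comb.
have hdG : dagb k G.
  apply/andP; split => //; apply/forallP => v; rewrite combE; case: ifP => _.
    by case/andP: hdS => _ /forallP.
  by case/andP: hdT => _ /forallP.
have hrG : restrict V G = restrict V Gstar.
  by apply/ffunP => j; apply/setP => i; rewrite !restrictE hG_at // (valP j).
have heq : markov_equiv (restrict V Gt) (restrict V G).
  rewrite hrG => A' B' C' h1 h2 h3.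
  by rewrite (heqT _ _ _ h1 h2 h3) (heqS _ _ _ h1 h2 h3).
have heq' : markov_equiv (restrict V G) (restrict V Gt).
  by move=> A' B' C' h1 h2 h3; apply: iff_sym; apply: heq.
exists G; last exact: hG_at.
split => //.
- move=> A' B' C' h1 h2 h3; split.
  + apply: (dsep_transfer (G1 := Gt) (G2 := G) (V := V) hG_out hinT hGin) => //.
      exact: hseg_of heq (acyc_n2c aG).
    exact: acyc_n2c aT.
  + have hG_out' : forall v, v \notin V -> G v = Gt v by move=> v /hG_out ->.
    apply: (dsep_transfer (G1 := G) (G2 := Gt) (V := V) hG_out' hGin hinT) => //.
      exact: hseg_of heq' (acyc_n2c aT).
    exact: acyc_n2c aG.
- apply/subsetP => f hf.
  have /imsetP [v _ ev] := subsetP hAS f hf.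
  have /imsetP [w _ ew] := subsetP hAT f hf.
  rewrite ev in ew; case: ew => evw egs.
  apply/imsetP; exists v => //; rewrite ev combE; case: ifP => // _.
  by rewrite egs evw.
Qed.
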